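(* Let $A,B\in\mathbb{R}^{n\times n}$ be symmetric matrices and suppose $I_{\succeq}(A,B)\neq\emptyset$. If $I_{\succeq}(A,B)$ is a single-point set, then $B$ is indefinite and $I_{\succ}(A,B)=\emptyset$. Otherwise, $I_{\succeq}(A,B)$ is an interval and (a) $Q(A)\cap Q(B)=N(A)\cap N(B)$; (b) $N(A+\sigma B)=N(A)\cap N(B)$ for every $\sigma$ in the interior of $I_{\succeq}(A,B)$; (c) $A$ and $B$ are simultaneously diagonalizable via congruence.
   Context: For symmetric $A,B$: $I_{\succ}(A,B)=\{\sigma\in\mathbb{R}: A+\sigma B\succ 0\}$ (positive definite), $I_{\succeq}(A,B)=\{\sigma\in\mathbb{R}: A+\sigma B\succeq 0\}$ (positive semidefinite), $Q(A)=\{v\in\mathbb{R}^n: v^TAv=0\}$, $N(A)=\{v: Av=0\}$. $A$ and $B$ are simultaneously diagonalizable via congruence if there is a nonsingular matrix $C$ such that both $C^TAC$ and $C^TBC$ are diagonal. *)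

(* Defs.v *)
From HB Require Import structures.
From mathcomp Require Import all_boot all_order all_algebra.
From mathcomp Require Import reals.
Set Implicit Arguments. Unset Strict Implicit. Unset Printing Implicit Defensive.
Import Order.TTheory GRing.Theory Num.Theory.
Local Open Scope ring_scope.

Section Defs.
Variables (R : realType) (n : nat).

Definition qf (A : 'M[R]_n) (v : 'cV[R]_n) : R := (v^T *m A *m v) 0 0.

Definition psd (A : 'M[R]_n) : Prop := forall v : 'cV[R]_n, 0 <= qf A v.
Definition pd (A : 'M[R]_n) : Prop := forall v : 'cV[R]_n, v != 0 -> 0 < qf A v.

Definition indefinite (B : 'M[R]_n) : Prop := ~ psd B /\ ~ psd (- B).

Definition I_pd (A B : 'M[R]_n) (s : R) : Prop := pd (A + s *: B).
Definition I_psd (A B : 'M[R]_n) (s : R) : Prop := psd (A + s *: B).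

Definition Qset (A : 'M[R]_n) (v : 'cV[R]_n) : Prop := qf A v = 0.
Definition Nset (A : 'M[R]_n) (v : 'cV[R]_n) : Prop := A *m v = 0.

Definition simul_diag_congr (A B : 'M[R]_n) : Prop :=
  exists C : 'M[R]_n, C \in unitmx /\
    is_diag_mx (C^T *m A *m C) /\ is_diag_mx (C^T *m B *m C).
End Defs.

Definition is_interval (R : realType) (S : R -> Prop) : Prop :=
  forall x y z : R, S x -> S y -> x <= z -> z <= y -> S z.

Definition in_interior (R : realType) (S : R -> Prop) (s : R) : Prop :=
  exists2 e : R, 0 < e & forall t : R, `|t - s| < e -> S t.

Definition single_point (R : realType) (S : R -> Prop) : Prop :=
  exists s : R, forall t : R, S t <-> t = s.

(* Main.v *)
Require Import Defs.
From HB Require Import structures.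
From mathcomp Require Import all_boot all_order all_algebra.
From mathcomp Require Import reals.
From mathcomp Require Import ring lra.
From mathcomp Require complex.
From Stdlib Require Import Classical.
Set Implicit Arguments. Unset Strict Implicit. Unset Printing Implicit Defensive.
Import Order.TTheory GRing.Theory Num.Theory.
Local Open Scope ring_scope.

Lemma nonunit_ker (F : fieldType) m (M : 'M[F]_m) : M \notin unitmx ->
  exists2 u : 'rV[F]_m, u != 0 & u *m M = 0.
Proof.
rewrite -row_free_unit -kermx_eq0 => nz.
have [i Hi] : exists i, row i (kermx M) != 0.
  apply/existsP; move: nz; apply: contraR; rewrite negb_exists => /forallP H.
  apply/eqP/row_matrixP => i; rewrite row0; exact/eqP/negPn/H.
exists (row i (kermx M)) => //; apply/sub_kermxP; exact: row_sub.
Qed.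

Lemma inj_unit (F : fieldType) m (M : 'M[F]_m) :
  (forall x : 'cV[F]_m, M *m x = 0 -> x = 0) -> M \in unitmx.
Proof.
move=> H; rewrite -unitmx_tr; apply/negPn/negP => /nonunit_ker [u /eqP unz uz].
apply: unz; have : u^T = 0.
  by apply: H; have := congr1 trmx uz; rewrite trmx_mul trmxK trmx0.
by move/(congr1 trmx); rewrite trmxK trmx0.
Qed.

Section GI.
Variable F : fieldType.
Variable Pr : forall m, 'M[F]_m -> 'M[F]_m -> Prop.
Hypothesis Hsym : forall m A B, @Pr m A B -> A^T = A /\ B^T = B.
Hypothesis Hst : forall m k (A B : 'M[F]_m) (U : 'M[F]_(m, k)),
  Pr A B -> Pr (U^T *m A *m U) (U^T *m B *m U).
Hypothesis Hsp : forall m (A B : 'M[F]_m.+1), Pr A B ->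
  exists v : 'cV[F]_m.+1, exists f : 'rV[F]_m.+1, (f *m v) 0 0 != 0 /\
   forall w : 'cV[F]_m.+1, f *m w = 0 -> v^T *m A *m w = 0 /\ v^T *m B *m w = 0.

Lemma GI n (A B : 'M[F]_n) : Pr A B -> exists C : 'M[F]_n, C \in unitmx /\
    is_diag_mx (C^T *m A *m C) /\ is_diag_mx (C^T *m B *m C).
Proof.
elim: n A B => [|m IH] A B PAB.
  exists 1%:M; split; first exact: unitmx1.
  by split; apply/is_diag_mxP => i; case: i.
have [symA symB] := Hsym PAB.
have [v [f [fv Hw]]] := Hsp PAB.
have [k fk] : exists k, f 0 k != 0.
  apply/existsP; move: fv; apply: contraR; rewrite negb_exists => /forallP H.
  rewrite mxE big1 // => i _; move/negPn: (H i) => /eqP ->; by rewrite mul0r.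
pose U : 'M[F]_(m.+1, m) :=
  \matrix_(r, j) ((r == lift k j)%:R - f 0 (lift k j) / f 0 k * (r == k)%:R).
have fU : f *m U = 0.
  apply/matrixP => i j; rewrite ord1 !mxE (bigD1 k) //= (bigD1 (lift k j)) ?neq_lift //=.
  rewrite big1; last first.
    move=> r /andP [rk rl]; rewrite !mxE (negPf rk).
    by rewrite (negPf rl) mulr0 subrr mulr0.
  rewrite !mxE !eqxx [lift k j == k]eq_sym (negPf (neq_lift k j)).
  rewrite !mulr1 !mulr0 sub0r addr0 mulrN.
  by rewrite mulrCA mulfV // mulr1 subr0 /= mulr1 addNr.
  by rewrite eq_sym neq_lift.
have Uinj : forall y : 'cV[F]_m, U *m y = 0 -> y = 0.
  move=> y Uy; apply/matrixP => j i; rewrite ord1 [RHS]mxE.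
  have {}Uy := congr1 (fun M : 'cV[F]_m.+1 => M (lift k j) 0) Uy; rewrite !mxE in Uy.
  rewrite -Uy (bigD1 j) //= big1 ?addr0; last first.
    move=> r rj; rewrite !mxE (inj_eq (@lift_inj _ k)) eq_sym (negPf rj).
    by rewrite eq_sym (negPf (neq_lift k j)) mulr0 subrr mul0r.
  by rewrite !mxE eqxx eq_sym (negPf (neq_lift k j)) mulr0 subr0 mul1r.
pose C : 'M[F]_(1 + m) := row_mx v U.
have CU : C \in unitmx.
  apply: inj_unit => x Cx.
  have := Cx; rewrite -[x]vsubmxK /C mul_row_col => Cx2.
  have x0 : usubmx x = 0.
    have := congr1 (mulmx f) Cx2; rewrite mulmxDr !mulmxA fU mul0mx addr0 mulmx0.
    move=> /(congr1 (fun M : 'M_1 => M 0 0)); rewrite mxE big_ord1 !mxE => /eqP.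
    have fv' := fv; rewrite mxE in fv'.
    rewrite mulf_eq0 (negPf fv') /= => /eqP x00.
    by apply/matrixP => i j; rewrite !ord1 !mxE x00.
  rewrite x0 mulmx0 add0r in Cx2.
  by rewrite x0 (Uinj _ Cx2) col_mx0.
have blk : forall X : 'M[F]_m.+1, X^T = X ->
    (forall w : 'cV[F]_m.+1, f *m w = 0 -> v^T *m X *m w = 0) ->
    C^T *m X *m C = block_mx (v^T *m X *m v) 0 0 (U^T *m X *m U).
  move=> X symX HX.
  have vXU : v^T *m X *m U = 0.
    have e : forall p q (M : 'M[F]_(p,q)) i j, M i j = (col j M) i 0.
      by move=> *; rewrite mxE.
    apply/matrixP => i j; rewrite e [RHS]e col0 colE -mulmxA -colE HX //.
    by rewrite colE mulmxA fU mul0mx.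
  have UXv : U^T *m X *m v = 0.
    have -> : U^T *m X *m v = (v^T *m X *m U)^T by rewrite !trmx_mul trmxK symX mulmxA.
    by rewrite vXU trmx0.
  by rewrite /C tr_row_mx mul_col_mx mul_col_row vXU UXv.
have [C2 [C2U [dA dB]]] := IH _ _ (Hst U PAB).
pose D : 'M[F]_(1 + m) := block_mx 1%:M 0 0 C2.
have fin : forall X : 'M[F]_m.+1, X^T = X ->
    (forall w : 'cV[F]_m.+1, f *m w = 0 -> v^T *m X *m w = 0) ->
    is_diag_mx (C2^T *m (U^T *m X *m U) *m C2) ->
    is_diag_mx ((C *m D)^T *m X *m (C *m D)).
  move=> X symX HX dX.
  have -> : (C *m D)^T *m X *m (C *m D) = D^T *m (C^T *m X *m C) *m D.
    by rewrite trmx_mul !mulmxA.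
  rewrite blk // /D tr_block_mx !trmx0 trmx1 !mulmx_block.
  rewrite !(mul0mx, mulmx0, mul1mx, mulmx1, addr0, add0r).
  rewrite is_diag_block_mx // eqxx eqxx dX andbT /=.
  by apply/is_diag_mxP => i j; rewrite !ord1 eqxx.
exists (C *m D); split.
  have dD : \det D = \det C2 by rewrite /D det_ublock det1 mul1r.
  rewrite unitmxE -dD in C2U.
  rewrite unitmx_mul CU /= unitmxE; exact: C2U.
split.
  by apply: fin => // w /Hw [].
by apply: fin => // w /Hw [].
Qed.
End GI.

Module EigenM.
Import complex.
Lemma sym_eig (R : realType) m (S : 'M[R]_m.+1) : S^T = S ->
  exists r : R, exists2 v : 'cV[R]_m.+1, v != 0 & S *m v = r *: v.
Proof.
move=> symS.
pose f := real_complex R.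
pose SC := map_mx f S.
have herm : SC \is hermsymmx.
  apply: realsym_hermsym.
    apply/is_hermitianmxP; rewrite expr0 scale1r map_mx_id //.
    by apply/matrixP => i j; rewrite !mxE -[in RHS]symS mxE.
  apply/mxOverP => i j; rewrite mxE; apply/complex_realP; by eexists.
have /orthomx_spectralP SCE := hermitian_normalmx herm.
have dreal := hermitian_spectral_diag_real herm.
set P := spectralmx SC in SCE; set d := spectral_diag SC in SCE dreal.
have PU : P \in unitmx by exact: spectral_unit.
set c := d 0 0.
have creal : c \is Num.real by exact: (mxOverP dreal).
exists (complex.Re c).
have : \det (S - (complex.Re c)%:M) = 0.
  apply/eqP; rewrite -(fmorph_eq0 f) -det_map_mx map_mxB map_scalar_mx /=.
  fold f SC; rewrite (RRe_real creal).
  have -> : SC - c%:M = invmx P *m (diag_mx d - c%:M) *m P.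
    rewrite mulmxBr mulmxBl -SCE; congr (_ - _).
    by rewrite mul_mx_scalar -scalemxAl mulVmx // scalemx1.
  rewrite !det_mulmx -diag_const_mx -linearB /= det_diag.
  rewrite (bigD1 ord0) //= !mxE subrr mul0r mulr0 mul0r //.
move=> /eqP detz.
have : (S - (complex.Re c)%:M)^T \notin unitmx by rewrite unitmxE det_tr unitfE detz.
case/nonunit_ker => u unz uz.
exists u^T; first by rewrite trmx_eq0.
have := congr1 trmx uz; rewrite trmx_mul trmxK trmx0 mulmxBl mul_scalar_mx.
by move/eqP; rewrite subr_eq0 => /eqP.
Qed.
End EigenM.
Import EigenM.

Section Basic.
Variable R : realType.

Definition bil n (M : 'M[R]_n) (u w : 'cV[R]_n) := (u^T *m M *m w) 0 0.

Lemma qf_cong n m (C : 'M[R]_(n, m)) (M : 'M[R]_n) w :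
  qf (C^T *m M *m C) w = qf M (C *m w).
Proof. by rewrite /qf trmx_mul !mulmxA. Qed.

Lemma qfD n (A B : 'M[R]_n) s v : qf (A + s *: B) v = qf A v + s * qf B v.
Proof.
by rewrite /qf mulmxDr mulmxDl -scalemxAr -scalemxAl !mxE.
Qed.

Lemma qf_add n (M : 'M[R]_n) u w :
  qf M (u + w) = qf M u + bil M u w + bil M w u + qf M w.
Proof.
rewrite /qf /bil (raddfD trmx) /= !mulmxDl !mulmxDr !mxE; lra.
Qed.

Lemma qf_scale n (M : 'M[R]_n) t w : qf M (t *: w) = t ^+ 2 * qf M w.
Proof. by rewrite /qf linearZ /= linearZ /= -!scalemxAl !mxE expr2 mulrA. Qed.

Lemma bilZr n (M : 'M[R]_n) t u w : bil M u (t *: w) = t * bil M u w.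
Proof. by rewrite /bil -scalemxAr mxE. Qed.

Lemma bilZl n (M : 'M[R]_n) t u w : bil M (t *: u) w = t * bil M u w.
Proof. by rewrite /bil linearZ /= -!scalemxAl mxE. Qed.

Lemma bil_sym n (M : 'M[R]_n) u w : M^T = M -> bil M u w = bil M w u.
Proof.
move=> sM; rewrite /bil -[in LHS](trmxK (u^T *m M *m w)) mxE.
by rewrite !trmx_mul trmxK sM mulmxA.
Qed.

Lemma bil_delta n (M : 'M[R]_n) i j : bil M (delta_mx i 0) (delta_mx j 0) = M i j.
Proof. by rewrite /bil trmx_delta -colE -rowE !mxE. Qed.

Lemma bil_delta_l n (M : 'M[R]_n) i w : bil M (delta_mx i 0) w = (M *m w) i 0.
Proof. by rewrite /bil trmx_delta -mulmxA -rowE mxE. Qed.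

Lemma psd_ker n (M : 'M[R]_n) v : M^T = M -> psd M -> qf M v = 0 -> M *m v = 0.
Proof.
move=> sM pM qv.
have bz : forall w, bil M w v = 0.
  move=> w; set b := bil M w v; set c := qf M w.
  have c0 : 0 <= c by exact: pM.
  pose t := - b / (c + 1).
  have := pM (v + t *: w).
  rewrite qf_add qv bilZr bilZl qf_scale (bil_sym _ _ sM) -/b -/c.
  have tE : t * (c + 1) = - b by rewrite /t mulfVK // lt0r_neq0 // ltr_pwDr.
  move=> H; clearbody t b c.
  have H2 : 0 <= b ^+ 2 * (- c - 2).
    have -> : b ^+ 2 * (- c - 2) = (c + 1) ^+ 2 * (0 + t * b + t * b + t ^+ 2 * c).
      have bE : b = - (t * (c + 1)) by rewrite tE opprK.
      rewrite bE; ring.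
    by apply: mulr_ge0 => //; rewrite sqr_ge0.
  apply/eqP; rewrite -sqrf_eq0; apply/eqP.
  have : 0 <= b ^+ 2 by rewrite sqr_ge0.
  nra.
apply/matrixP => i j; rewrite ord1 [RHS]mxE -bil_delta_l; exact: bz.
Qed.

Lemma qf_diag n (D : 'M[R]_n) w : is_diag_mx D ->
  qf D w = \sum_i D i i * w i 0 ^+ 2.
Proof.
move=> /is_diag_mxP dD; rewrite /qf mxE; apply: eq_bigr => j _.
rewrite mxE (bigD1 j) //= big1 ?addr0; last first.
  by move=> i ij; rewrite dD ?mulr0.
by rewrite mxE expr2; ring.
Qed.

Lemma unit_inj n (M : 'M[R]_n) (x : 'cV[R]_n) : M \in unitmx -> M *m x = 0 -> x = 0.
Proof. by move=> MU Mx; rewrite -(mulKmx MU x) Mx mulmx0. Qed.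

Lemma psd_unit_pos n (M : 'M[R]_n) v : M^T = M -> psd M -> M \in unitmx ->
  v != 0 -> 0 < qf M v.
Proof.
move=> sM pM MU vn; rewrite lt0r pM andbT; apply: contra vn => /eqP q0.
by apply/eqP; apply: (unit_inj MU); exact: psd_ker.
Qed.

Lemma rv_norm_neq0 n (u : 'rV[R]_n) : u != 0 -> (u *m u^T) 0 0 != 0.
Proof.
move=> un; apply: contra un; rewrite mxE => /eqP H; apply/eqP/matrixP => i j.
rewrite ord1 mxE.
have : forall k, true -> 0 <= u 0 k * u^T k 0 by move=> k _; rewrite mxE -expr2 sqr_ge0.
move/psumr_eq0P => /(_ H j isT); rewrite mxE => /eqP; rewrite mulf_eq0 orbb.
by move/eqP.
Qed.

Lemma qf_delta n (M : 'M[R]_n) i : qf M (delta_mx i 0) = M i i.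
Proof. exact: bil_delta. Qed.

Lemma exists_qf_neq0 n (X : 'M[R]_n) : X^T = X -> X != 0 ->
  exists v, qf X v != 0.
Proof.
move=> sX Xn.
have [i [j Hij]] : exists i j, X i j != 0.
  have : [exists i, exists j, X i j != 0].
    apply: contraR Xn => /existsPn H; apply/eqP/matrixP => i j; rewrite mxE.
    by move/existsPn: (H i) => /(_ j)/negPn/eqP.
  by case/existsP => i /existsP [j H]; exists i, j.
case: (eqVneq (X i i) 0) => Xii; last by exists (delta_mx i 0); rewrite qf_delta.
case: (eqVneq (X j j) 0) => Xjj; last by exists (delta_mx j 0); rewrite qf_delta.
exists (delta_mx i 0 + delta_mx j 0).
rewrite qf_add !qf_delta !bil_delta Xii Xjj add0r addr0.
have -> : X j i = X i j by rewrite -[in LHS]sX mxE.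
by rewrite -mulr2n mulrn_eq0 negb_or Hij.
Qed.

Lemma lagrange n (M : 'M[R]_n) : M^T = M ->
  exists C : 'M[R]_n, C \in unitmx /\ is_diag_mx (C^T *m M *m C).
Proof.
move=> sM.
pose Pr := fun m (X Y : 'M[R]_m) => X^T = X /\ Y = 0.
have H1 : forall m X Y, @Pr m X Y -> X^T = X /\ Y^T = Y.
  by move=> m X Y [-> ->]; rewrite trmx0.
have H2 : forall m k (X Y : 'M[R]_m) (U : 'M[R]_(m, k)), Pr m X Y ->
    Pr k (U^T *m X *m U) (U^T *m Y *m U).
  move=> m k X Y U [sX ->]; split; last by rewrite mulmx0 mul0mx.
  by rewrite !trmx_mul trmxK sX mulmxA.
suff H3 : forall m (X Y : 'M[R]_m.+1), Pr _ X Y ->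
  exists v : 'cV[R]_m.+1, exists f : 'rV[R]_m.+1, (f *m v) 0 0 != 0 /\
   forall w : 'cV[R]_m.+1, f *m w = 0 -> v^T *m X *m w = 0 /\ v^T *m Y *m w = 0.
  have [C [CU [dC _]]] := @GI R Pr H1 H2 H3 n M 0 (conj sM erefl).
  by exists C.
- move=> m X Y [sX ->].
  case: (eqVneq X 0) => [X0|Xn].
    exists (delta_mx 0 0), (delta_mx 0 0)^T; split.
      by rewrite trmx_delta mul_delta_mx mxE !eqxx oner_neq0.
    by move=> w _; rewrite X0 !mulmx0 !mul0mx.
  have [v qv] := exists_qf_neq0 sX Xn.
  exists v, (X *m v)^T; split.
    by rewrite trmx_mul sX.
  move=> w fw; split; last by rewrite !mulmx0 mul0mx.
  by rewrite -sX -trmx_mul fw.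
Qed.

Lemma chol n (M : 'M[R]_n) : M^T = M -> psd M -> M \in unitmx ->
  exists L : 'M[R]_n, L \in unitmx /\ L^T *m M *m L = 1%:M.
Proof.
move=> sM pM MU.
have [C [CU /is_diag_mxP dC]] := lagrange sM.
set D := C^T *m M *m C in dC *.
have Dpos : forall i, 0 < D i i.
  move=> i; rewrite -qf_delta qf_cong psd_unit_pos //.
  apply/negP => /eqP /(unit_inj CU) /matrixP /(_ i 0).
  by rewrite !mxE !eqxx /= => /eqP; rewrite oner_eq0.
pose e := \row_i (Num.sqrt (D i i))^-1.
have e0 : forall i, e 0 i != 0.
  by move=> i; rewrite mxE invr_eq0 sqrtr_eq0 -ltNge Dpos.
exists (C *m diag_mx e); split.
  rewrite unitmx_mul CU unitmxE det_diag unitfE; apply/prodf_neq0 => i _; exact: e0.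
have -> : (C *m diag_mx e)^T *m M *m (C *m diag_mx e) = diag_mx e *m D *m diag_mx e.
  by rewrite trmx_mul tr_diag_mx !mulmxA.
clearbody D; rewrite mul_diag_mx mul_mx_diag; apply/matrixP => i j; rewrite !mxE.
case: (eqVneq i j) => [<-|ij]; last first.
  by rewrite (dC i j) // mulr0 mul0r.
rewrite mulrC mulrA -expr2 exprVn sqr_sqrtr ?ltW // mulVf //.
exact: lt0r_neq0.
Qed.

Definition PrSD m (M B : 'M[R]_m) :=
  M^T = M /\ B^T = B /\ psd M /\ (forall v : 'cV[R]_m, M *m v = 0 -> B *m v = 0).

Lemma qf_ker n (M : 'M[R]_n) x : M *m x = 0 -> qf M x = 0.
Proof. by move=> Mx; rewrite /qf -mulmxA Mx mulmx0 mxE. Qed.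

Lemma SD n (M B : 'M[R]_n) : PrSD M B -> simul_diag_congr M B.
Proof.
move=> P.
have H1 : forall m X Y, @PrSD m X Y -> X^T = X /\ Y^T = Y.
  by move=> m X Y [? [? _]].
have H2 : forall m k (X Y : 'M[R]_m) (U : 'M[R]_(m, k)), PrSD X Y ->
    PrSD (U^T *m X *m U) (U^T *m Y *m U).
  move=> m k X Y U [sX [sY [pX kX]]]; split; first by rewrite !trmx_mul trmxK sX mulmxA.
  split; first by rewrite !trmx_mul trmxK sY mulmxA.
  split; first by move=> x; rewrite qf_cong; exact: pX.
  move=> x /qf_ker; rewrite qf_cong => /(psd_ker sX pX) /kX Yx.
  by rewrite -!mulmxA Yx mulmx0.
suff H3 : forall m (X Y : 'M[R]_m.+1), PrSD X Y ->
  exists v : 'cV[R]_m.+1, exists f : 'rV[R]_m.+1, (f *m v) 0 0 != 0 /\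
   forall w : 'cV[R]_m.+1, f *m w = 0 -> v^T *m X *m w = 0 /\ v^T *m Y *m w = 0.
  exact: (@GI R PrSD H1 H2 H3 n M B P).
move=> m X Y [sX [sY [pX kX]]].
case: (boolP (X \in unitmx)) => XU; last first.
  have [u un uX] := nonunit_ker XU.
  have Xu : X *m u^T = 0.
    by rewrite -[X]sX -trmx_mul uX trmx0.
  exists u^T, u; split; first exact: rv_norm_neq0.
  move=> w _; rewrite trmxK uX mul0mx; split => //.
  by rewrite -[u]trmxK -sY -trmx_mul (kX _ Xu) trmx0 mul0mx.
have [L [LU LE]] := chol sX pX XU.
have sB' : (L^T *m Y *m L)^T = L^T *m Y *m L by rewrite !trmx_mul trmxK sY mulmxA.
have [r [w wn Bw]] := sym_eig sB'.
set v := L *m w.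
have Yv : Y *m v = r *: (X *m v).
  apply/eqP; rewrite -subr_eq0; apply/eqP.
  apply: (unit_inj (M := L^T)); first by rewrite unitmx_tr.
  by rewrite mulmxBr -scalemxAr /v !mulmxA Bw LE mul1mx subrr.
have vn : v != 0.
  by apply: contra wn => /eqP /(unit_inj LU) ->.
exists v, (X *m v)^T; split.
  rewrite trmx_mul sX; exact: lt0r_neq0 (psd_unit_pos sX pX XU vn).
move=> w' fw; split; first by rewrite -sX -trmx_mul fw.
by rewrite -sY -trmx_mul Yv linearZ /= -scalemxAl fw scaler0.
Qed.

End Basic.


Theorem theorem3 (R : realType) (n : nat) (A B : 'M[R]_n)
  (symA : A^T = A) (symB : B^T = B)
  (hne : exists s : R, I_psd A B s) :
  (single_point (I_psd A B) ->
     indefinite B /\ (forall s : R, ~ I_pd A B s)) /\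
  (~ single_point (I_psd A B) ->
     is_interval (I_psd A B) /\
     (forall v : 'cV[R]_n, (Qset A v /\ Qset B v) <-> (Nset A v /\ Nset B v)) /\
     (forall s : R, in_interior (I_psd A B) s ->
        forall v : 'cV[R]_n, Nset (A + s *: B) v <-> (Nset A v /\ Nset B v)) /\
     simul_diag_congr A B).
Proof.
have sAB : forall s : R, (A + s *: B)^T = A + s *: B.
  move=> s; apply/matrixP => i j; rewrite !mxE.
  by rewrite -[in RHS]symA -[in RHS]symB !mxE.
have qfN : forall (M : 'M[R]_n) v, qf (- M) v = - qf M v.
  by move=> M v; rewrite /qf mulmxN mulNmx mxE.
have psdI : forall s, I_psd A B s <-> forall v, 0 <= qf A v + s * qf B v.
  by move=> s; split => H v; [rewrite -qfD; exact: H | rewrite qfD; exact: H].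
split.
  case=> s0 Hs0.
  have I0 : I_psd A B s0 by apply/Hs0.
  split.
    split.
      move=> pB.
      have : I_psd A B (s0 + 1).
        apply/psdI => v; have := (proj1 (psdI s0) I0 v); have := pB v; lra.
      move/Hs0/eqP; rewrite -subr_eq0 addrAC subrr add0r oner_eq0 //.
    move=> pB.
    have : I_psd A B (s0 - 1).
      apply/psdI => v; have := (proj1 (psdI s0) I0 v); have := pB v; rewrite qfN; lra.
    move/Hs0/eqP; rewrite -subr_eq0 addrAC subrr add0r oppr_eq0 oner_eq0 //.
  move=> s pds.
  have qf0 : forall (M : 'M[R]_n), qf M 0 = 0 by move=> M; apply: qf_ker; rewrite mulmx0.
  have Is : I_psd A B s.
    move=> v; case: (eqVneq v 0) => [->|vn]; first by rewrite qf0.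
    exact: ltW (pds v vn).
  have ss0 : s = s0 by apply/Hs0.
  have P : PrSD (A + s *: B) B.
    split; first exact: sAB. split=> //. split=> //.
    move=> v /qf_ker qv; case: (eqVneq v 0) => [->|vn]; first by rewrite mulmx0.
    by have := pds v vn; rewrite qv ltxx.
  have [C [CU [dD dE]]] := SD P.
  set D := C^T *m (A + s *: B) *m C in dD.
  set E := C^T *m B *m C in dE.
  have Dpos : forall i, 0 < D i i.
    move=> i; rewrite -qf_delta qf_cong; apply: pds.
    apply/negP => /eqP /(unit_inj CU) /matrixP /(_ i 0).
    by rewrite !mxE !eqxx /= => /eqP; rewrite oner_eq0.
  pose S := \sum_i `|E i i| / D i i.
  have S0 : 0 <= S by apply: sumr_ge0 => i _; rewrite divr_ge0 // ltW.
  pose t := (1 + S)^-1.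
  have t0 : 0 < t by rewrite invr_gt0; lra.
  have tS : t * S <= 1.
    by rewrite /t ler_pdivrMl ?mul1r; lra.
  have It : I_psd A B (s + t).
    apply/psdI => v.
    have -> : qf A v + (s + t) * qf B v = qf (A + s *: B) v + t * qf B v.
      by rewrite qfD; ring.
    have vE : v = C *m (invmx C *m v) by rewrite mulKVmx.
    rewrite vE -!(qf_cong C) -/D -/E !qf_diag // mulr_sumr -big_split /=.
    apply: sumr_ge0 => i _.
    rewrite [t * _]mulrA -mulrDl; apply: mulr_ge0; last exact: sqr_ge0.
    have Ei : `|E i i| / D i i <= S.
      by rewrite /S (bigD1 i) //= lerDl; apply: sumr_ge0 => j _; rewrite divr_ge0 // ltW.
    have Di := Dpos i.
    have h1 : t * `|E i i| <= D i i.
      have : t * (`|E i i| / D i i) <= 1.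
        apply: le_trans tS; apply: ler_wpM2l => //; exact: ltW.
      by rewrite mulrA ler_pdivrMr // mul1r.
    have h2 : - `|E i i| <= E i i by rewrite lerNl -normrN ler_norm.
    nra.
  have := Hs0 (s + t); case=> /(_ It); rewrite ss0 => /eqP.
  by rewrite -subr_eq0 addrAC subrr add0r => /eqP t00 _; move: t0; rewrite t00 ltxx.
move=> nsp.
have [s Is] := hne.
have [s1 [s2 [I1 [I2 s12]]]] : exists s1 s2, I_psd A B s1 /\ I_psd A B s2 /\ s1 < s2.
  have [t [It ts]] : exists t, I_psd A B t /\ t != s.
    apply: NNPP => H; apply: nsp; exists s => t; split.
      by move=> It; apply/eqP; apply: contraT => ts; case: H; exists t.
    by move=> ->.
  case: (ltgtP t s) ts => // [tl|tl] _; first by exists t, s.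
  by exists s, t.
have interv : is_interval (I_psd A B).
  move=> x y z Ix Iy xz zy; apply/psdI => v.
  have := proj1 (psdI x) Ix v; have := proj1 (psdI y) Iy v.
  case: (lerP 0 (qf B v)) => hb.
    have : 0 <= (z - x) * qf B v by apply: mulr_ge0 => //; lra.
    nra.
  have : 0 <= (y - z) * (- qf B v) by apply: mulr_ge0; lra.
  nra.
have partA : forall v : 'cV[R]_n, (Qset A v /\ Qset B v) <-> (Nset A v /\ Nset B v).
  move=> v; split; last first.
    by case=> Av Bv; split; apply: qf_ker.
  case=> qA qB.
  have K : forall s, I_psd A B s -> (A + s *: B) *m v = 0.
    move=> s' Is'; apply: psd_ker; [exact: sAB | exact: Is' |].
    by rewrite qfD /Qset in qA qB *; rewrite qA qB mulr0 addr0.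
  have Bv : B *m v = 0.
    have := K _ I2; have := K _ I1; rewrite !mulmxDl -!scalemxAl => h1 h2.
    have : (s2 - s1) *: (B *m v) = 0.
      have E : (s2 - s1) *: (B *m v) =
          (A *m v + s2 *: (B *m v)) - (A *m v + s1 *: (B *m v)).
        by rewrite scalerBl opprD addrACA subrr add0r.
      by rewrite E h1 h2 subrr.
    move/eqP; rewrite scaler_eq0 subr_eq0 (gt_eqF s12) /= => /eqP //.
  split => //; have := K _ I1; by rewrite mulmxDl -scalemxAl Bv scaler0 addr0.
have partB : forall s : R, in_interior (I_psd A B) s ->
    forall v : 'cV[R]_n, Nset (A + s *: B) v <-> (Nset A v /\ Nset B v).
  move=> s' [e e0 He] v; split; last first.
    by case=> Av Bv; rewrite /Nset mulmxDl -scalemxAl Av Bv scaler0 addr0.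
  move=> /qf_ker; rewrite qfD => q0.
  have Ip := He (s' + e / 2); have Im := He (s' - e / 2).
  have Ip' : I_psd A B (s' + e / 2).
    by apply: Ip; rewrite addrAC subrr add0r ger0_norm; lra.
  have Im' : I_psd A B (s' - e / 2).
    by apply: Im; rewrite addrAC subrr add0r normrN ger0_norm; lra.
  have h1 := proj1 (psdI _) Ip' v; have h2 := proj1 (psdI _) Im' v.
  have qB : qf B v = 0 by nra.
  apply/partA; split; rewrite /Qset //.
  by rewrite qB mulr0 addr0 in q0.
split => //; split => //; split => //.
pose s0 := (s1 + s2) / 2.
have int0 : in_interior (I_psd A B) s0.
  exists ((s2 - s1) / 2); first lra.
  move=> t; rewrite /s0 => ht; apply: (interv s1 s2) => //.
    by move: ht; rewrite ltr_norml; lra.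
  by move: ht; rewrite ltr_norml; lra.
have P : PrSD (A + s0 *: B) B.
  split; first exact: sAB. split=> //.
  split; first by apply: (interv s1 s2) => //; rewrite /s0; lra.
  by move=> v /(partB _ int0 v) [].
have [C [CU [dD dE]]] := SD P.
exists C; split=> //; split=> //.
have -> : C^T *m A *m C = C^T *m (A + s0 *: B) *m C - s0 *: (C^T *m B *m C).
  by rewrite mulmxDr mulmxDl -scalemxAr -scalemxAl addrK.
move: dD dE => /is_diag_mxP dD /is_diag_mxP dE.
move: (C^T *m (A + s0 *: B) *m C) (C^T *m B *m C) dD dE => M N dD dE.
apply/is_diag_mxP => i j ij.
by rewrite !mxE dD // dE // mulr0 subrr.
Qed.
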